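(* Let $\Phi(h)$ be a consistent one-step method (i.e.\ of order $p\geq 1$) and let $\alpha_1,\dots,\alpha_l\in\mathbb{C}$ with $\sum_{i=1}^l\alpha_i=1$, so that the composition $$\Psi(h)=\prod_{i=1}^{l}\Phi(\alpha_i h)=\Phi(\alpha_1h)\cdots\Phi(\alpha_lh)$$ is also consistent. Suppose there exists $k$, $1\leq k\leq l$, with $\Re(\alpha_k)<0$. Then for any $\beta_1,\dots,\beta_m\in\mathbb{C}$ such that the method $$\prod_{j=1}^{m}\Psi(\beta_j h)=\prod_{j=1}^{m}\Big(\prod_{i=1}^{l}\Phi(\beta_j\alpha_i h)\Big)$$ is consistent (i.e.\ $\sum_{j=1}^m\beta_j=1$), there exists $j$, $1\le j\le m$, such that $\Re(\beta_j\alpha_k)<0$.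
   Context: A method is a family of (approximate) evolution operators $\Phi(h)$ depending on a step size $h$, approximating the exact flow $e^{h(A+B)}$ of $\dot u = Au+Bu$; it is of order $p$ if $\Phi(h)-e^{h(A+B)}=\mathcal{O}(h^{p+1})$ formally, and consistent if of order at least $1$. Products of methods are interpreted from left to right. A composition $\prod_i\Phi(\gamma_ih)$ of a consistent method is consistent iff $\sum_i\gamma_i=1$. *)

(* Defs.v *)
From HB Require Import structures.
From mathcomp Require Import all_boot all_order all_algebra.
From mathcomp Require Export complex.
Set Implicit Arguments.
Unset Strict Implicit.
Unset Printing Implicit Defensive.

(* Main.v *)
Require Import Defs.
From mathcomp Require Import all_boot all_order all_algebra complex.
Import Order.TTheory GRing.Theory Num.Theory.
Local Open Scope ring_scope.

Lemma Re_sum (R : rcfType) (m : nat) (F : 'I_m -> R[i]) :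
  Re (\sum_(j < m) F j) = \sum_(j < m) Re (F j).
Proof.
elim/big_rec2: _ => [|j y x _ Hx]; first by rewrite raddf0.
rewrite raddfD -Hx. done.
Qed.

Theorem lemma2p1 (R : rcfType) (l m : nat)
  (alpha : 'I_l -> R[i]) (beta : 'I_m -> R[i]) (k : 'I_l) :
  \sum_(i < l) alpha i = 1 ->
  Re (alpha k) < 0 ->
  \sum_(j < m) beta j = 1 ->
  exists j : 'I_m, Re (beta j * alpha k) < 0.
Proof.
move=> _ Hk Hb.
have E : Re (alpha k) = \sum_(j < m) Re (beta j * alpha k).
  by rewrite -Re_sum -mulr_suml Hb mul1r.
case: (boolP [exists j : 'I_m, Re (beta j * alpha k) < 0]).
  by move/existsP.
move/existsPn => H.
have : 0 <= \sum_(j < m) Re (beta j * alpha k).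
  apply: sumr_ge0 => j _.
  have r : Re (beta j * alpha k) \is Num.real by apply: Creal_Re.
  by rewrite real_leNgt ?real0 // H.
by rewrite -E real_leNgt ?real0 ?Creal_Re // Hk.
Qed.
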